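(* Let $G=(\mathcal{S},\mathcal{E})$ be a connected undirected graph with node set $\mathcal{S}=\{1,\dots,N\}$, let $I_G\in\mathbb{R}^{|\mathcal{E}|\times N}$ be an oriented incidence matrix of $G$, and let $A:=I_G\otimes I_{n_\theta}=(A_1,\dots,A_N)$ with column blocks $A_i\in\mathbb{R}^{|\mathcal{E}|n_\theta\times n_\theta}$. For $i\in\mathcal{S}$ let $M_i\in\mathbb{R}^{n_y\times n_\theta}$ have full column rank and $y_i\in\mathbb{R}^{n_y}$. Define $$S:=\sum_{i\in\mathcal{S}}A_i(M_i^\top M_i)^{-1}A_i^\top,\qquad s:=-\sum_{i\in\mathcal{S}}A_i(M_i^\top M_i)^{-1}M_i^\top y_i.$$ Then $s\in\operatorname{range}(S)$.
   Context: An oriented incidence matrix of $G$ has one row per edge $(i,j)\in\mathcal{E}$, with entry $+1$ in column $i$, $-1$ in column $j$, and $0$ elsewhere. $\otimes$ denotes the Kronecker product and $I_{n_\theta}$ the $n_\theta\times n_\theta$ identity. *)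

(* Defs.v *)
From HB Require Import structures.
From mathcomp Require Import all_boot all_order all_algebra.
Set Implicit Arguments. Unset Strict Implicit. Unset Printing Implicit Defensive.
Import Order.TTheory GRing.Theory Num.Theory.
Local Open Scope ring_scope.

(* Entry of a matrix indexed by naturals; 0 out of range. *)
Definition mxnat (R : nmodType) m n (A : 'M[R]_(m, n)) (i j : nat) : R :=
  match @insub nat (fun k => k < m)%N 'I_m i, @insub nat (fun k => k < n)%N 'I_n j with
  | Some i', Some j' => A i' j'
  | _, _ => 0
  end.

Definition kronmx (R : pzRingType) m n p q (A : 'M[R]_(m, n)) (B : 'M[R]_(p, q))
  : 'M[R]_(m * p, n * q) :=
  \matrix_(k < m * p, l < n * q)
     (mxnat A (k %/ p)%N (l %/ q)%N * mxnat B (k %% p)%N (l %% q)%N).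

(* The i-th column block (of width q) of a matrix with N*q columns:
   columns i*q, ..., i*q + q - 1 (i counted from 0). *)
Definition colblock (R : nmodType) r N q (A : 'M[R]_(r, N * q)) (i : 'I_N)
  : 'M[R]_(r, q) :=
  \matrix_(k < r, l < q) mxnat A k (i * q + l)%N.

(* An undirected graph on nodes 'I_N with m edges; edge k is given with an
   (arbitrary) orientation ep k = (tail, head). *)
Definition adj N m (ep : 'I_m -> 'I_N * 'I_N) : rel 'I_N :=
  fun u v => [exists k, (ep k == (u, v)) || (ep k == (v, u))].

Definition simple_edges N m (ep : 'I_m -> 'I_N * 'I_N) : Prop :=
  (forall k, (ep k).1 != (ep k).2) /\
  (forall k k', k != k' -> ep k' <> ep k /\ ep k' <> ((ep k).2, (ep k).1)).

Definition connected_graph N m (ep : 'I_m -> 'I_N * 'I_N) : Prop :=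
  forall u v, connect (adj ep) u v.

Definition incidence (R : pzRingType) N m (ep : 'I_m -> 'I_N * 'I_N) : 'M[R]_(m, N) :=
  \matrix_(k < m, i < N) (((i == (ep k).1) : nat)%:R - ((i == (ep k).2) : nat)%:R).

(* Main.v *)
Require Import Defs.
From HB Require Import structures.
From mathcomp Require Import all_boot all_order all_algebra.
Import Order.TTheory GRing.Theory Num.Theory.
Local Open Scope ring_scope.

Section Aux.
Local Set Implicit Arguments.
Variable R : realFieldType.

Lemma col_mulmx m n p (A : 'M[R]_(m, n)) (B : 'M[R]_(n, p)) b :
  col b (A *m B) = A *m col b B.
Proof. apply/matrixP=> i j; rewrite !mxE; apply: eq_bigr => k _; rewrite !mxE. done. Qed.

Lemma sq_ge0 n (v : 'cV[R]_n) : 0 <= (v^T *m v) 0 0.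
Proof. rewrite mxE; apply: sumr_ge0 => j _; rewrite mxE; by rewrite -expr2 sqr_ge0. Qed.

Lemma sq_eq0 n (v : 'cV[R]_n) : (v^T *m v) 0 0 = 0 -> v = 0.
Proof.
rewrite mxE => H; apply/matrixP => i j; rewrite (ord1 j) mxE.
have H0 : forall k : 'I_n, predT k -> 0 <= v^T 0 k * v k 0 by move=> k _; rewrite mxE -expr2 sqr_ge0.
have := psumr_eq0P H0 H (i := i) isT.
by rewrite mxE => /eqP; rewrite mulf_eq0 orbb => /eqP.
Qed.

Lemma mx11_eq0 (X : 'M[R]_1) : X 0 0 = 0 -> X = 0.
Proof. by move=> H; apply/matrixP => i j; rewrite (ord1 i) (ord1 j) H mxE. Qed.

Lemma gram_inj ny t (M : 'M[R]_(ny, t)) : \rank M = t ->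
  forall z : 'cV_t, M *m z = 0 -> z = 0.
Proof.
move=> HM z Hz.
have rf : row_free M^T by rewrite /row_free mxrank_tr HM.
apply: trmx_inj; rewrite trmx0.
apply: (row_free_inj rf); by rewrite -trmx_mul Hz trmx0 mul0mx.
Qed.

Lemma gram_unit ny t (M : 'M[R]_(ny, t)) : \rank M = t -> M^T *m M \in unitmx.
Proof.
move=> HM; rewrite -row_free_unit -kermx_eq0; apply/eqP/row_matrixP => i.
rewrite row0.
have : (row i (kermx (M^T *m M)) *m (M^T *m M) = 0) by apply/sub_kermxP; exact: row_sub.
set r := row i _ => Hr.
have H1 : (M *m r^T) = 0.
  apply: sq_eq0; rewrite trmx_mul trmxK mulmxA -(mulmxA r) Hr mul0mx.
  by rewrite mxE.
by rewrite -[r]trmxK (gram_inj HM H1) trmx0.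
Qed.

Lemma quad ny t (M : 'M[R]_(ny, t)) (HM : \rank M = t) (w : 'cV_t) :
  exists z : 'cV_t, (w^T *m invmx (M^T *m M) *m w) = (M *m z)^T *m (M *m z)
     /\ (M *m z = 0 -> w = 0).
Proof.
have U := gram_unit HM.
exists (invmx (M^T *m M) *m w); split; last first.
  by move=> /(gram_inj HM) H; rewrite -(mulKVmx U w) H mulmx0.
set z := invmx _ *m w.
have -> : w = M^T *m M *m z by rewrite /z (mulKVmx U w).
rewrite -mulmxA (mulmxA (invmx _)) (mulVmx U) mul1mx.
by rewrite !trmx_mul trmxK !mulmxA.
Qed.

End Aux.

Section Main.
Local Set Implicit Arguments.
Variable R : realFieldType.

Lemma kerS k N t ny (B : 'I_N -> 'M[R]_(k, t)) (M : 'I_N -> 'M[R]_(ny, t))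
  (HM : forall i, \rank (M i) = t) (v : 'cV[R]_k) :
  (\sum_(i < N) (B i *m invmx ((M i)^T *m M i) *m (B i)^T))^T *m v = 0 ->
  forall i, (B i)^T *m v = 0.
Proof.
set S := \sum_(i < N) _ => HS.
have H0 : v^T *m S *m v = 0.
  have H0t : (v^T *m S *m v)^T = 0 by rewrite !trmx_mul trmxK HS mulmx0.
  by rewrite -[LHS]trmxK H0t trmx0.
have E : v^T *m S *m v = \sum_(i < N) ((B i)^T *m v)^T *m invmx ((M i)^T *m M i) *m ((B i)^T *m v).
  rewrite /S mulmx_sumr mulmx_suml; apply: eq_bigr => i _.
  by rewrite trmx_mul trmxK !mulmxA.
have Hq : forall i, exists z, ((B i)^T *m v)^T *m invmx ((M i)^T *m M i) *m ((B i)^T *m v)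
   = (M i *m z)^T *m (M i *m z) /\ (M i *m z = 0 -> (B i)^T *m v = 0).
  by move=> i; apply: quad.
have Hge : forall i : 'I_N, predT i -> 0 <= (((B i)^T *m v)^T *m invmx ((M i)^T *m M i) *m ((B i)^T *m v)) 0 0.
  by move=> i _; have [z [-> _]] := Hq i; apply: sq_ge0.
have Hsum : \sum_(i < N) (((B i)^T *m v)^T *m invmx ((M i)^T *m M i) *m ((B i)^T *m v)) 0 0 = 0.
  by rewrite -summxE -E H0 mxE.
move=> i; have := psumr_eq0P Hge Hsum (i := i) isT.
have [z [-> Hz]] := Hq i.
by move/sq_eq0.
Qed.

End Main.

Theorem lemma2 (R : realFieldType) (N m ntheta ny : nat)
  (ep : 'I_m -> 'I_N * 'I_N)
  (Hsimple : simple_edges ep) (Hconn : connected_graph ep)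
  (M : 'I_N -> 'M[R]_(ny, ntheta)) (y : 'I_N -> 'cV[R]_ny)
  (HM : forall i, \rank (M i) = ntheta) :
  let A : 'M[R]_(m * ntheta, N * ntheta) :=
    kronmx (incidence R ep) (1%:M : 'M[R]_ntheta) in
  let S : 'M[R]_(m * ntheta) :=
    \sum_(i < N) (colblock A i *m invmx ((M i)^T *m M i) *m (colblock A i)^T) in
  let s : 'cV[R]_(m * ntheta) :=
    - \sum_(i < N) (colblock A i *m invmx ((M i)^T *m M i) *m (M i)^T *m y i) in
  exists x : 'cV[R]_(m * ntheta), S *m x = s.
Proof.
move=> A S s.
have Hv : forall v : 'cV[R]_(m * ntheta), S^T *m v = 0 -> s^T *m v = 0.
  move=> v Hv; have Hi := kerS (fun i => colblock A i) M HM Hv.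
  rewrite /s raddfN /= raddf_sum /= mulNmx mulmx_suml big1 ?oppr0 // => i _.
  by rewrite !trmx_mul -!mulmxA Hi !mulmx0.
have : (s^T <= S^T)%MS.
  rewrite submxE; apply/eqP/matrixP => a b.
  have Hb : S^T *m col b (cokermx S^T) = 0 by rewrite -col_mulmx mulmx_coker; apply/matrixP=> ? ?; rewrite !mxE.
  have := Hv _ Hb; rewrite -col_mulmx => /matrixP /(_ a 0).
  by rewrite !mxE.
case/submxP => D HD; exists D^T.
by rewrite -[s]trmxK HD trmx_mul trmxK.
Qed.
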